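(* Let $f:\mathbb{Z}^n\to\mathbb{R}\cup\{+\infty\}$ be an M-convex function with bounded $\operatorname{dom} f$, and $x_0\in\operatorname{dom} f$. Run algorithm M-SD from $x_0$ (with any choice of minimizing pair in each iteration), and let $x^*$ be its output. Then for every $i\in N$, along the sequence of iterates the component $x(i)$ is non-increasing if $x^*(i)\le x_0(i)$ and non-decreasing if $x^*(i)\ge x_0(i)$.
   Context: $N=\{1,\dots,n\}$; $\chi_i\in\{0,1\}^n$ is the $i$-th unit vector. For $f:\mathbb{Z}^n\to\mathbb{R}\cup\{+\infty\}$, $\operatorname{dom} f=\{x\in\mathbb{Z}^n: f(x)<+\infty\}$. $f$ is M-convex if $\operatorname{dom} f\neq\emptyset$ and for all $x,y\in\operatorname{dom} f$ and every $i$ with $x(i)>y(i)$ there is $j$ with $x(j)<y(j)$ such that $f(x)+f(y)\ge f(x-\chi_i+\chi_j)+f(y+\chi_i-\chi_j)$. For $x\in\operatorname{dom} f$ and $i,j\in N$, $f'(x;i,j)=f(x+\chi_i-\chi_j)-f(x)$ (possibly $+\infty$). Algorithm M-SD: set $x:=x_0$; repeatedly choose $i,j\in N$ minimizing $f'(x;i,j)$; if $f'(x;i,j)=0$ output $x$ and stop; otherwise set $x:=x+\chi_i-\chi_j$ and repeat. *)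

(* Defs.v *)
From HB Require Import structures.
From mathcomp Require Import all_boot all_order all_algebra.
From mathcomp Require Import reals constructive_ereal.
Set Implicit Arguments. Unset Strict Implicit. Unset Printing Implicit Defensive.
Import Order.TTheory GRing.Theory Num.Theory.
Local Open Scope ring_scope.
Local Open Scope ereal_scope.

Definition pt (n : nat) := {ffun 'I_n -> int}.

Definition chi (n : nat) (i : 'I_n) : pt n := [ffun j => ((j == i) : nat)%:Z].

Definition move (n : nat) (x : pt n) (i j : 'I_n) : pt n :=
  [ffun k => (x k + chi i k - chi j k)%R].

(* f : Z^n -> R \cup {+oo}, modelled as \bar R never taking -oo. *)
Definition never_mnoo (R : realType) (n : nat) (f : pt n -> \bar R) : Prop :=
  forall x, f x != -oo.

Definition in_dom (R : realType) (n : nat) (f : pt n -> \bar R) (x : pt n) : Prop :=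
  f x < +oo.

Definition M_convex (R : realType) (n : nat) (f : pt n -> \bar R) : Prop :=
  (exists x, in_dom f x) /\
  forall x y, in_dom f x -> in_dom f y ->
    forall i, (y i < x i)%R ->
      exists2 j, (x j < y j)%R &
        f (move x j i) + f (move y i j) <= f x + f y.

Definition bounded_dom (R : realType) (n : nat) (f : pt n -> \bar R) : Prop :=
  exists B : int, forall x, in_dom f x -> forall i, (`|x i| <= B)%R.

Definition fder (R : realType) (n : nat) (f : pt n -> \bar R) (x : pt n) (i j : 'I_n)
  : \bar R := f (move x i j) - f x.

Definition minimizing (R : realType) (n : nat) (f : pt n -> \bar R) (x : pt n) (i j : 'I_n)
  : Prop := forall k l, fder f x i j <= fder f x k l.

(* A terminating run of M-SD: iterates xs 0 = x0, ..., xs m = output. *)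
Definition MSD_run (R : realType) (n : nat) (f : pt n -> \bar R) (x0 : pt n)
  (xs : nat -> pt n) (m : nat) : Prop :=
  [/\ xs 0%N = x0,
      (forall k, (k < m)%N -> exists i j,
          [/\ minimizing f (xs k) i j, fder f (xs k) i j != 0
            & xs k.+1 = move (xs k) i j])
    & exists i j, minimizing f (xs m) i j /\ fder f (xs m) i j = 0].

(* Main.v *)
Require Import Defs.
From HB Require Import structures.
From mathcomp Require Import all_boot all_order all_algebra.
From mathcomp Require Import reals constructive_ereal.
From mathcomp Require Import zify.
Set Implicit Arguments. Unset Strict Implicit.
Import Order.TTheory GRing.Theory Num.Theory.
Local Open Scope ring_scope.

Section Aux.
Variables (R : realType) (n : nat) (f : pt n -> \bar R).
Hypothesis hf : never_mnoo f.

Lemma move_id (x : pt n) i : move x i i = x.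
Proof. by apply/ffunP => k; rewrite !ffunE addrK. Qed.

Lemma moveE (x : pt n) i j k :
  move x i j k = x k + ((k == i) : nat)%:Z - ((k == j) : nat)%:Z.
Proof. by rewrite !ffunE. Qed.

Lemma move_move1 (x : pt n) i j l : move (move x i j) j l = move x i l.
Proof.
apply/ffunP => k; rewrite !moveE.
case: (k == i); case: (k == j); case: (k == l) => /=; lia.
Qed.

Lemma move_move2 (x : pt n) i j l : move (move x i j) l i = move x l j.
Proof.
apply/ffunP => k; rewrite !moveE.
case: (k == i); case: (k == j); case: (k == l) => /=; lia.
Qed.

Lemma move_move3 (x : pt n) i j a l : move (move (move x i j) a l) l a = move x i j.
Proof.
apply/ffunP => k; rewrite !moveE.
case: (k == i); case: (k == j); case: (k == l); case: (k == a) => /=; lia.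
Qed.

Lemma move_move4 (x : pt n) i j a l : move (move (move x i j) a l) j a = move x i l.
Proof.
apply/ffunP => k; rewrite !moveE.
case: (k == i); case: (k == j); case: (k == l); case: (k == a) => /=; lia.
Qed.

Lemma move_move5 (x : pt n) i j b l : move (move (move x i j) l b) b l = move x i j.
Proof.
apply/ffunP => k; rewrite !moveE.
case: (k == i); case: (k == j); case: (k == l); case: (k == b) => /=; lia.
Qed.

Lemma move_move6 (x : pt n) i j b l : move (move (move x i j) l b) b i = move x l j.
Proof.
apply/ffunP => k; rewrite !moveE.
case: (k == i); case: (k == j); case: (k == l); case: (k == b) => /=; lia.
Qed.

Lemma dom_fin x : in_dom f x -> exists r, f x = r%:E.
Proof.
rewrite /in_dom; move: (hf x); case: (f x) => [r| |] //; by exists r.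
Qed.

Lemma min_le x i j k l : in_dom f x -> minimizing f x i j ->
  (f (move x i j) <= f (move x k l))%E.
Proof.
move=> /dom_fin [r hr] hmin; have := hmin k l.
by rewrite /fder hr leeD2rE.
Qed.

Lemma step_lt x i j : in_dom f x -> minimizing f x i j -> fder f x i j != 0%E ->
  (f (move x i j) < f x)%E.
Proof.
move=> hx hmin hne; have := hmin i i.
rewrite /fder move_id; move: hx hne => /dom_fin [r hr]; rewrite /fder hr.
rewrite subee // => hne hle.
have : (f (move x i j) - r%:E < 0)%E by rewrite lt_neqAle hne hle.
by rewrite suber_lt0.
Qed.

Lemma cancel_le (a c d e : \bar R) r : e = r%:E ->
  (c + d <= a + e)%E -> (e <= d)%E -> (c <= a)%E.
Proof.
move=> he h1 h2.
have h3 : (c + e <= a + e)%E.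
  by apply: le_trans h1; apply: leeD2l.
by move: h3; rewrite he leeD2rE.
Qed.

Definition Dn x a := forall l, (f x <= f (move x a l))%E.
Definition Up x b := forall l, (f x <= f (move x l b))%E.

Hypothesis hM : M_convex f.

Lemma stepDn_new x i j : in_dom f x -> minimizing f x i j ->
  Dn (move x i j) j.
Proof. by move=> hx hmin l; rewrite move_move1; apply: min_le. Qed.

Lemma stepUp_new x i j : in_dom f x -> minimizing f x i j ->
  Up (move x i j) i.
Proof. by move=> hx hmin l; rewrite move_move2; apply: min_le. Qed.

Lemma stepDn x i j a : in_dom f x -> minimizing f x i j -> fder f x i j != 0%E ->
  Dn x a -> Dn (move x i j) a.
Proof.
move=> hx hmin hne hA l.
have hlt := step_lt hx hmin hne.
case: (eqVneq a l) => [<-|hal]; first by rewrite move_id.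
case: (eqVneq a j) => [->|haj]; first by apply: stepDn_new.
case: (eqVneq a i) => [hai|hai].
  by exfalso; subst a; move: (lt_le_trans hlt (hA j)); rewrite ltxx.
set z := move (move x i j) a l.
case hz: (f z < +oo)%E; last first.
  by move/negbT: hz; rewrite -leNgt leye_eq => /eqP ->; rewrite leey.
have hxa : x a < z a.
  rewrite /z !moveE (negbTE hai) (negbTE haj) eqxx (negbTE hal) /=; lia.
have [m hm hle] := hM.2 z x hz hx a hxa.
have hm' : (m == j) || (m == l).
  move: hm; rewrite /z !moveE.
  case: (m == i); case: (m == j); case: (m == l); case: (m == a) => /=; lia.
have [r hr] := dom_fin hx.
case/orP: hm' => /eqP hmm; subst m.
- have := cancel_le hr hle; rewrite move_move4 => h.
  have h2 := h (hA j); rewrite /z in h2 *.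
  by apply: le_trans h2; apply: min_le.
- have := cancel_le hr hle; rewrite move_move3 => h.
  exact: h (hA l).
Qed.

Lemma stepUp x i j b : in_dom f x -> minimizing f x i j -> fder f x i j != 0%E ->
  Up x b -> Up (move x i j) b.
Proof.
move=> hx hmin hne hB l.
have hlt := step_lt hx hmin hne.
case: (eqVneq b l) => [<-|hbl]; first by rewrite move_id.
case: (eqVneq b i) => [->|hbi]; first by apply: stepUp_new.
case: (eqVneq b j) => [hbj|hbj].
  by exfalso; subst b; move: (lt_le_trans hlt (hB i)); rewrite ltxx.
set z := move (move x i j) l b.
case hz: (f z < +oo)%E; last first.
  by move/negbT: hz; rewrite -leNgt leye_eq => /eqP ->; rewrite leey.
have hzb : z b < x b.
  rewrite /z !moveE (negbTE hbi) (negbTE hbj) eqxx (negbTE hbl) /=; lia.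
have [m hm hle] := hM.2 x z hx hz b hzb.
have hm' : (m == i) || (m == l).
  move: hm; rewrite /z !moveE.
  case: (m == i); case: (m == j); case: (m == l); case: (m == b) => /=; lia.
have [r hr] := dom_fin hx.
rewrite addeC [(f x + _)%E]addeC in hle.
case/orP: hm' => /eqP hmm; subst m.
- have := cancel_le hr hle; rewrite move_move6 => h.
  have h2 := h (hB i); rewrite /z in h2 *.
  by apply: le_trans h2; apply: min_le.
- have := cancel_le hr hle; rewrite move_move5 => h.
  exact: h (hB l).
Qed.

End Aux.

Lemma move_dec n (x : pt n) i j a : x a + ((a == i) : nat)%:Z - ((a == j) : nat)%:Z < x a -> a = j.
Proof. by case: (eqVneq a j) => // _; case: (a == i) => /=; lia. Qed.

Lemma move_inc n (x : pt n) i j a : x a < x a + ((a == i) : nat)%:Z - ((a == j) : nat)%:Z -> a = i.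
Proof. by case: (eqVneq a i) => // _; case: (a == j) => /=; lia. Qed.

Section Main.
Variables (R : realType) (n : nat) (f : pt n -> \bar R).
Hypotheses (hf : never_mnoo f) (hM : M_convex f).
Variables (x0 : pt n) (hx0 : in_dom f x0) (xs : nat -> pt n) (m : nat).
Hypothesis hrun : MSD_run f x0 xs m.

Lemma inv k : (k <= m)%N -> in_dom f (xs k) /\ forall s, (s < k)%N -> forall a,
  (xs s.+1 a < xs s a -> Dn f (xs k) a) /\ (xs s a < xs s.+1 a -> Up f (xs k) a).
Proof.
case: hrun => h0 hstep _.
elim: k => [|k IH] hk.
  by rewrite h0; split.
have hkm : (k < m)%N by [].
have [hdom hI] := IH (ltnW hkm).
have [i [j [hmin hne hnext]]] := hstep k hkm.
have hlt := step_lt hf hdom hmin hne.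
split.
  by rewrite /in_dom hnext; apply: lt_le_trans hlt _; rewrite leey.
move=> s; rewrite ltnS leq_eqVlt => /orP [/eqP ->|hs] a.
- rewrite hnext !moveE; split.
  + by move/move_dec => ->; apply: stepDn_new.
  + by move/move_inc => ->; apply: stepUp_new.
- have [hA hB] := hI s hs a; rewrite hnext; split.
  + by move=> h; apply: stepDn => //; apply: hA.
  + by move=> h; apply: stepUp => //; apply: hB.
Qed.

Lemma no_dec_inc s t a : (s < t)%N -> (t < m)%N ->
  xs s.+1 a < xs s a -> ~ (xs t a < xs t.+1 a).
Proof.
move=> hst htm hdec hinc.
case: hrun => _ hstep _.
have [hdom hI] := inv (ltnW htm).
have hD := (hI s hst a).1 hdec.
have [i [j [hmin hne hnext]]] := hstep t htm.
have hlt := step_lt hf hdom hmin hne.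
move: hinc; rewrite hnext moveE => /move_inc ha; subst a.
by move: (lt_le_trans hlt (hD j)); rewrite ltxx.
Qed.

Lemma no_inc_dec s t a : (s < t)%N -> (t < m)%N ->
  xs s a < xs s.+1 a -> ~ (xs t.+1 a < xs t a).
Proof.
move=> hst htm hinc hdec.
case: hrun => _ hstep _.
have [hdom hI] := inv (ltnW htm).
have hU := (hI s hst a).2 hinc.
have [i [j [hmin hne hnext]]] := hstep t htm.
have hlt := step_lt hf hdom hmin hne.
move: hdec; rewrite hnext moveE => /move_dec ha; subst a.
by move: (lt_le_trans hlt (hU i)); rewrite ltxx.
Qed.

End Main.

Lemma chain_le (g : nat -> int) m : (forall t, (t < m)%N -> g t <= g t.+1) ->
  forall p q, (p <= q <= m)%N -> g p <= g q.
Proof.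
move=> h p q /andP [hpq hqm]; elim: q hpq hqm => [|q IH] hpq hqm.
  by move: hpq; rewrite leqn0 => /eqP ->.
case: (ltngtP p q.+1) hpq => // [hlt|->] _.
  by apply: le_trans (IH hlt (ltnW hqm)) (h q hqm).
done.
Qed.

Theorem mainTheorem7 (R : realType) (n : nat) (f : pt n -> \bar R)
  (hf : never_mnoo f) (hM : M_convex f) (hB : bounded_dom f)
  (x0 : pt n) (hx0 : in_dom f x0)
  (xs : nat -> pt n) (m : nat) (hrun : MSD_run f x0 xs m) :
  forall i : 'I_n,
    (xs m i <= x0 i -> forall k, (k < m)%N -> xs k.+1 i <= xs k i) /\
    (x0 i <= xs m i -> forall k, (k < m)%N -> xs k i <= xs k.+1 i).
Proof.
have h0 : xs 0%N = x0 by case: hrun.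
move=> a; split => hend k hk.
- rewrite leNgt; apply/negP => hinc.
  have hmono : forall t, (t < m)%N -> xs t a <= xs t.+1 a.
    move=> t ht; rewrite leNgt; apply/negP => hdec.
    case: (ltngtP t k) => [htk|hkt|htk0]; last subst t.
    + exact: (no_dec_inc hf hM hx0 hrun htk hk hdec hinc).
    + exact: (no_inc_dec hf hM hx0 hrun hkt ht hinc hdec).
    + by move: (lt_trans hinc hdec); rewrite ltxx.
  have hp1 : (0 <= k <= m)%N by rewrite leq0n (ltnW hk).
  have c1 := chain_le hmono hp1.
  have hp2 : (k.+1 <= m <= m)%N by rewrite hk leqnn.
  have c2 := chain_le hmono hp2.
  rewrite h0 in c1.
  by move: (le_trans hend c1) => c3; move: (lt_le_trans (le_lt_trans c3 hinc) c2); rewrite ltxx.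
- rewrite leNgt; apply/negP => hdec.
  have hmono : forall t, (t < m)%N -> xs t.+1 a <= xs t a.
    move=> t ht; rewrite leNgt; apply/negP => hinc.
    case: (ltngtP t k) => [htk|hkt|htk0]; last subst t.
    + exact: (no_inc_dec hf hM hx0 hrun htk hk hinc hdec).
    + exact: (no_dec_inc hf hM hx0 hrun hkt ht hdec hinc).
    + by move: (lt_trans hinc hdec); rewrite ltxx.
  have hmono' : forall t, (t < m)%N -> - xs t a <= - xs t.+1 a.
    by move=> t ht; rewrite lerN2; apply: hmono.
  have hp1 : (0 <= k <= m)%N by rewrite leq0n (ltnW hk).
  have c1 := chain_le hmono' hp1.
  have hp2 : (k.+1 <= m <= m)%N by rewrite hk leqnn.
  have c2 := chain_le hmono' hp2.
  rewrite h0 lerN2 in c1; rewrite lerN2 in c2.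
  by move: (lt_le_trans (le_lt_trans c2 hdec) c1) => c3; move: (lt_le_trans c3 hend); rewrite ltxx.
Qed.
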